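(* Let $G$ be a finitely generated group in which every non-trivial element is a generalized torsion element. Then $G$ decomposes as a free product $G=A\ast B$ with $A$ and $B$ non-trivial if and only if $G$ is isomorphic to the infinite dihedral group $D_{\infty}=\mathbb{Z}_2\ast\mathbb{Z}_2$.
   Context: For $g,x$ in a group, $g^{x}:=xgx^{-1}$. A non-trivial element $g$ of a group $G$ is a generalized torsion element if there exist a positive integer $n$ and $x_1,\ldots,x_n\in G$ with $g^{x_1}g^{x_2}\cdots g^{x_n}=1$. $\mathbb{Z}_2$ denotes the cyclic group of order two. *)

(* Defs.v *)
From Stdlib Require Import ZArith Lia List Bool.
Import ListNotations.
Open Scope Z_scope.

Record grp := Grp {
  car :> Type;
  gmul : car -> car -> car;
  gone : car;
  ginv : car -> car;
  gmulA : forall x y z, gmul x (gmul y z) = gmul (gmul x y) z;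
  gmul1 : forall x, gmul gone x = x;
  gmulV : forall x, gmul (ginv x) x = gone
}.

Arguments gmul {g}.
Arguments gone {g}.
Arguments ginv {g}.

Definition conj {G : grp} (g x : G) : G := gmul x (gmul g (ginv x)).

Definition lprod {G : grp} (l : list G) : G := fold_right gmul gone l.

Definition gen_torsion {G : grp} (g : G) : Prop :=
  g <> gone /\
  exists xs : list G, xs <> [] /\ lprod (map (conj g) xs) = gone.

Definition is_subgroup {G : grp} (S : G -> Prop) : Prop :=
  S gone /\ (forall x y, S x -> S y -> S (gmul x y)) /\ (forall x, S x -> S (ginv x)).

Definition fin_gen (G : grp) : Prop :=
  exists s : list G, forall S : G -> Prop,
    is_subgroup S -> (forall x, In x s -> S x) -> forall g, S g.

Definition hom_on {G H : grp} (S : G -> Prop) (f : G -> H) : Prop :=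
  forall x y, S x -> S y -> f (gmul x y) = gmul (f x) (f y).

Definition hom {G H : grp} (f : G -> H) : Prop := hom_on (fun _ => True) f.

(* G is the (internal) free product of its subgroups A and B:
   universal property of the free product A * B (coproduct of groups). *)
Definition free_product (G : grp) (A B : G -> Prop) : Prop :=
  is_subgroup A /\ is_subgroup B /\
  forall (H : grp) (fA fB : G -> H), hom_on A fA -> hom_on B fB ->
    (exists phi : G -> H, hom phi /\
        (forall a, A a -> phi a = fA a) /\ (forall b, B b -> phi b = fB b)) /\
    (forall phi psi : G -> H, hom phi -> hom psi ->
        (forall a, A a -> phi a = psi a) -> (forall b, B b -> phi b = psi b) ->
        forall x, phi x = psi x).

Definition isomorphic (G H : grp) : Prop :=
  exists f : G -> H, hom f /\ (forall x y, f x = f y -> x = y) /\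
                     (forall y, exists x, f x = y).

(* The infinite dihedral group D_oo = Z ⋊ Z_2 (isomorphic to Z_2 * Z_2):
   elements (n, b); (n,b)(m,c) = (n + (-1)^b m, b xor c). *)
Definition dmul (x y : Z * bool) : Z * bool :=
  (fst x + (if snd x then - fst y else fst y), xorb (snd x) (snd y)).
Definition dinv (x : Z * bool) : Z * bool :=
  (if snd x then fst x else - fst x, snd x).

Lemma dmulA x y z : dmul x (dmul y z) = dmul (dmul x y) z.
Proof.
  destruct x as [a b], y as [c d], z as [e f]; unfold dmul; simpl.
  f_equal; [destruct b, d; simpl; lia | destruct b, d, f; reflexivity].
Qed.

Lemma dmul1 x : dmul (0, false) x = x.
Proof. destruct x as [a b]; unfold dmul; simpl; f_equal. Qed.

Lemma dmulV x : dmul (dinv x) x = (0, false).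
Proof. destruct x as [a b]; unfold dmul, dinv; simpl; destruct b; simpl; f_equal; lia. Qed.

Definition D_inf : grp := Grp (Z * bool) dmul (0, false) dinv dmulA dmul1 dmulV.

(* Main.v *)
Require Import Defs.
From Stdlib Require Import ZArith Lia List Bool ClassicalEpsilon ProofIrrelevance FunctionalExtensionality Classical.
Import ListNotations.

Local Infix "**" := gmul (at level 40, left associativity).

Section GB.
Variable G : grp.

Lemma mulVr (x : G) : x ** ginv x = gone.
Proof.
  rewrite <- (gmul1 _ (x ** ginv x)).
  rewrite <- (gmulV _ (ginv x)) at 1.
  rewrite <- gmulA, (gmulA _ (ginv x) x), gmulV, gmul1. apply gmulV.
Qed.

Lemma mulr1 (x : G) : x ** gone = x.
Proof. rewrite <- (gmulV _ x), gmulA, mulVr, gmul1. reflexivity. Qed.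

Lemma mulKl (z x y : G) : z ** x = z ** y -> x = y.
Proof. intros H. rewrite <- (gmul1 _ x), <- (gmul1 _ y), <- (gmulV _ z), <- !gmulA, H. reflexivity. Qed.

Lemma mulKr (z x y : G) : x ** z = y ** z -> x = y.
Proof. intros H. rewrite <- (mulr1 x), <- (mulr1 y), <- (mulVr z), !gmulA, H. reflexivity. Qed.

Lemma inv_uniq (x y : G) : x ** y = gone -> y = ginv x.
Proof. intros H. apply (mulKl x). rewrite H, mulVr. reflexivity. Qed.

Lemma inv_uniq_l (x y : G) : x ** y = gone -> x = ginv y.
Proof. intros H. apply (mulKr y). rewrite H, gmulV. reflexivity. Qed.

Lemma invK (x : G) : ginv (ginv x) = x.
Proof. symmetry. apply inv_uniq. apply gmulV. Qed.

Lemma inv_mul (x y : G) : ginv (x ** y) = ginv y ** ginv x.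
Proof. symmetry. apply inv_uniq. rewrite gmulA, <- (gmulA _ x y), mulVr, mulr1, mulVr. reflexivity. Qed.

Lemma inv1 : ginv (@gone G) = gone.
Proof. symmetry. apply inv_uniq. apply mulr1. Qed.

Lemma idem1 (x : G) : x ** x = x -> x = gone.
Proof. intros H. apply (mulKl x). rewrite H, mulr1. reflexivity. Qed.

Fixpoint gpow (x : G) (n : nat) : G := match n with O => gone | S k => x ** gpow x k end.

Lemma gpow_S_r x n : gpow x (S n) = gpow x n ** x.
Proof.
  induction n. simpl. rewrite gmul1, mulr1. reflexivity.
  change (gpow x (S (S n))) with (x ** gpow x (S n)). rewrite IHn at 1. rewrite gmulA. reflexivity.
Qed.

Definition zpow (x : G) (n : Z) : G :=
  if Z.leb 0 n then gpow x (Z.to_nat n) else gpow (ginv x) (Z.to_nat (- n)).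

Lemma zpow0 x : zpow x 0 = gone.
Proof. reflexivity. Qed.

Lemma zpow_succ x n : zpow x (n + 1) = zpow x n ** x.
Proof.
  unfold zpow. destruct (Z.leb_spec 0 n); destruct (Z.leb_spec 0 (n+1)); try lia.
  - replace (Z.to_nat (n+1)) with (S (Z.to_nat n)) by lia. apply gpow_S_r.
  - assert (n = -1) by lia. subst. simpl. rewrite mulr1, gmulV. reflexivity.
  - replace (Z.to_nat (- n)) with (S (Z.to_nat (- (n+1)))) by lia.
    rewrite gpow_S_r, <- gmulA, gmulV, mulr1. reflexivity.
Qed.

Lemma zpow_pred x n : zpow x (n - 1) = zpow x n ** ginv x.
Proof.
  replace n with ((n - 1) + 1) at 2 by lia. rewrite zpow_succ, <- gmulA, mulVr, mulr1. reflexivity.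
Qed.

Lemma zpow_add x m n : zpow x (m + n) = zpow x m ** zpow x n.
Proof.
  induction n using Z.peano_ind.
  - rewrite Z.add_0_r, zpow0, mulr1. reflexivity.
  - rewrite <- !Z.add_1_r, Z.add_assoc, !zpow_succ, IHn, gmulA. reflexivity.
  - rewrite <- !Z.sub_1_r, Z.add_sub_assoc, !zpow_pred, IHn, gmulA. reflexivity.
Qed.

Lemma zpow1 x : zpow x 1 = x.
Proof. simpl. apply mulr1. Qed.

Definition Theta (u v : G) (p : Z * bool) : G :=
  zpow (v ** u) (fst p) ** (if snd p then u else gone).

Lemma u_zpow (u v : G) : u ** u = gone -> v ** v = gone ->
  forall n, u ** zpow (v ** u) n = zpow (v ** u) (- n) ** u.
Proof.
  intros Hu Hv.
  assert (Hiu : ginv u = u) by (symmetry; apply inv_uniq; exact Hu).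
  assert (Hiv : ginv v = v) by (symmetry; apply inv_uniq; exact Hv).
  assert (Hw : u ** (v ** u) = ginv (v ** u) ** u).
  { rewrite inv_mul, Hiu, Hiv. rewrite !gmulA. reflexivity. }
  assert (Hw' : u ** ginv (v ** u) = (v ** u) ** u).
  { rewrite inv_mul, Hiu, Hiv. rewrite !gmulA, Hu, gmul1, <- gmulA, Hu, mulr1. reflexivity. }
  induction n using Z.peano_ind.
  - simpl. rewrite mulr1, gmul1. reflexivity.
  - rewrite <- Z.add_1_r, zpow_succ, gmulA, IHn, <- gmulA, Hw, gmulA.
    replace (- (n+1)) with (- n - 1) by lia. rewrite zpow_pred. reflexivity.
  - rewrite <- Z.sub_1_r, zpow_pred, gmulA, IHn, <- gmulA, Hw', gmulA.
    replace (- (n-1)) with (- n + 1) by lia. rewrite zpow_succ. reflexivity.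
Qed.

End GB.

Arguments zpow {G}. Arguments gpow {G}. Arguments Theta {G}.

Lemma Theta_hom (H : grp) (u v : H) : u ** u = gone -> v ** v = gone ->
  forall p q : D_inf, Theta u v (gmul p q) = Theta u v p ** Theta u v q.
Proof.
  intros Hu Hv [n b] [m c]. unfold Theta. simpl.
  destruct b; simpl.
  - rewrite zpow_add.
    rewrite <- !gmulA, (gmulA _ u (zpow (v ** u) m)), u_zpow by assumption.
    rewrite <- !gmulA. f_equal. f_equal.
    destruct c; simpl; rewrite ?Hu, ?mulr1; reflexivity.
  - rewrite zpow_add, mulr1, !gmulA. reflexivity.
Qed.
Section Count.
Variable T : Type.

Definition ind (P : Prop) : Z := if excluded_middle_informative P then 1%Z else 0%Z.

Lemma ind_true (P : Prop) : P -> ind P = 1%Z.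
Proof. unfold ind. destruct (excluded_middle_informative P); tauto. Qed.
Lemma ind_false (P : Prop) : ~ P -> ind P = 0%Z.
Proof. unfold ind. destruct (excluded_middle_informative P); tauto. Qed.
Lemma ind_iff (P Q : Prop) : (P <-> Q) -> ind P = ind Q.
Proof. unfold ind. destruct (excluded_middle_informative P), (excluded_middle_informative Q); tauto. Qed.
Lemma ind_bnd (P : Prop) : (0 <= ind P <= 1)%Z.
Proof. unfold ind. destruct (excluded_middle_informative P); lia. Qed.
Lemma ind_or (P Q : Prop) : ~ (P /\ Q) -> ind (P \/ Q) = (ind P + ind Q)%Z.
Proof. unfold ind. destruct (excluded_middle_informative P), (excluded_middle_informative Q),
  (excluded_middle_informative (P \/ Q)); tauto || lia. Qed.
Lemma ind_imp (P Q : Prop) : (P -> Q) -> (ind P <= ind Q)%Z.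
Proof. unfold ind. destruct (excluded_middle_informative P), (excluded_middle_informative Q); tauto || lia. Qed.

Definition prefix (p l : list T) := exists z, l = p ++ z.
Definition suffix (p l : list T) := exists z, l = z ++ p.

Fixpoint occ (p l : list T) : Z :=
  match l with [] => 0%Z | h :: t => (ind (prefix p (h :: t)) + occ p t)%Z end.

Lemma prefix_app p l m : prefix p l -> prefix p (l ++ m).
Proof. intros [z ->]. exists (z ++ m). symmetry. apply app_assoc. Qed.

Lemma prefix_app_long p l m : (length p <= length l)%nat -> prefix p (l ++ m) -> prefix p l.
Proof.
  intros Hl [z Hz]. destruct (app_eq_app _ _ _ _ Hz) as [w [[E1 E2]|[E1 E2]]].
  - subst l. exists w. reflexivity.
  - subst p. rewrite length_app in Hl. destruct w; [|simpl in Hl; lia].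
    exists []. rewrite !app_nil_r. reflexivity.
Qed.

Lemma occ_app_bound p l1 l2 :
  let d := (occ p (l1 ++ l2) - occ p l1 - occ p l2)%Z in
  (0 <= d /\ d <= Z.of_nat (length l1) /\ d <= Z.of_nat (length p))%Z.
Proof.
  induction l1 as [|h t IH]; cbv zeta in *. simpl; lia.
  change ((h :: t) ++ l2) with (h :: (t ++ l2)).
  change (occ p (h :: t ++ l2)) with (ind (prefix p (h :: t ++ l2)) + occ p (t ++ l2))%Z.
  change (occ p (h :: t)) with (ind (prefix p (h :: t)) + occ p t)%Z.
  change (length (h :: t)) with (S (length t)). rewrite Nat2Z.inj_succ.
  pose proof (ind_imp _ _ (prefix_app p (h :: t) l2)) as H1. simpl app in H1.
  pose proof (ind_bnd (prefix p (h :: t ++ l2))). pose proof (ind_bnd (prefix p (h :: t))).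
  destruct (Nat.le_gt_cases (length p) (S (length t))) as [Hle|Hgt].
  - assert (ind (prefix p (h :: t ++ l2)) <= ind (prefix p (h :: t)))%Z.
    { apply ind_imp. apply (prefix_app_long p (h :: t) l2). simpl; lia. }
    lia.
  - lia.
Qed.

Lemma prefix_snoc p x h : prefix p (x ++ [h]) <-> prefix p x \/ p = x ++ [h].
Proof.
  split.
  - intros [z Hz]. destruct z as [|a z] using rev_ind.
    + right. rewrite app_nil_r in Hz. auto.
    + left. rewrite app_assoc in Hz. apply app_inj_tail in Hz. destruct Hz as [-> _]. exists z. reflexivity.
  - intros [H | ->]. apply prefix_app; auto. exists []. rewrite app_nil_r. reflexivity.
Qed.

Lemma prefix_len p l : prefix p l -> (length p <= length l)%nat.
Proof. intros [z ->]. rewrite length_app. lia. Qed.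
Lemma suffix_len p l : suffix p l -> (length p <= length l)%nat.
Proof. intros [z ->]. rewrite length_app. lia. Qed.

Lemma suffix_cons p h y : suffix p (h :: y) <-> suffix p y \/ p = h :: y.
Proof.
  split.
  - intros [z Hz]. destruct z as [|a z]; simpl in Hz.
    + right; auto.
    + left. injection Hz as _ ->. exists z. reflexivity.
  - intros [[z ->] | ->]. exists (h :: z). reflexivity. exists []. reflexivity.
Qed.

Lemma occ_snoc p m h : p <> [] -> occ p (m ++ [h]) = (occ p m + ind (suffix p (m ++ [h])))%Z.
Proof.
  intros Hp. induction m as [|a m IH]; simpl.
  - f_equal. rewrite Z.add_0_r. apply ind_iff. transitivity (p = [h]).
    + split.
      * intros [z Hz]. destruct p as [|b p]; [tauto|]. simpl in Hz. injection Hz as -> Hz.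
        symmetry in Hz. apply app_eq_nil in Hz. destruct Hz as [-> _]. reflexivity.
      * intros ->. exists []. reflexivity.
    + split.
      * intros ->. exists []. reflexivity.
      * intros [z Hz]. destruct z as [|b z]; simpl in Hz. auto.
        injection Hz as _ Hz. symmetry in Hz. apply app_eq_nil in Hz. destruct Hz as [_ ->]. tauto.
  - rewrite IH.
    change (a :: m ++ [h]) with ((a :: m) ++ [h]).
    rewrite (ind_iff _ _ (prefix_snoc p (a :: m) h)).
    change ((a :: m) ++ [h]) with (a :: (m ++ [h])).
    rewrite (ind_iff _ _ (suffix_cons p a (m ++ [h]))).
    rewrite !ind_or.
    + lia.
    + intros [H1 E]; subst p; first [apply suffix_len in H1 | apply prefix_len in H1];
      simpl in H1; rewrite ?length_app in H1; simpl in H1; lia.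
    + intros [H1 E]; subst p; first [apply suffix_len in H1 | apply prefix_len in H1];
      simpl in H1; rewrite ?length_app in H1; simpl in H1; lia.
Qed.

Lemma occ_rev p l : p <> [] -> occ p (rev l) = occ (rev p) l.
Proof.
  intros Hp. induction l as [|h t IH]; simpl. reflexivity.
  rewrite occ_snoc by auto. rewrite IH. rewrite Z.add_comm. f_equal.
  apply ind_iff. split.
  - intros [z Hz]. exists (rev z). rewrite <- (rev_involutive (h :: t)). simpl. rewrite Hz.
    apply rev_app_distr.
  - intros [z Hz]. exists (rev z). rewrite <- (rev_involutive p), <- rev_app_distr, <- Hz.
    reflexivity.
Qed.

End Count.

Arguments occ {T}. Arguments prefix {T}. Arguments suffix {T}.

Lemma map_inj_l (T U : Type) (f : T -> U) : (forall x y, f x = f y -> x = y) ->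
  forall l l', map f l = map f l' -> l = l'.
Proof.
  intros Hf l. induction l as [|a l IH]; intros [|b l'] H; simpl in H; try discriminate. reflexivity.
  injection H as H1 H2. f_equal; auto.
Qed.

Lemma occ_map (T U : Type) (f : T -> U) : (forall x y, f x = f y -> x = y) ->
  forall p l, occ (map f p) (map f l) = occ p l.
Proof.
  intros Hf p l. induction l as [|h t IH]; simpl. reflexivity. rewrite IH. f_equal.
  apply ind_iff. split.
  - intros [z Hz]. destruct (map_eq_app f (h :: t) (map f p) z Hz) as (l1 & l2 & E & E1 & E2).
    apply map_inj_l in E1; auto. subst. exists l2. exact E.
  - intros [z Hz]. exists (map f z). rewrite <- map_app, <- Hz. reflexivity.
Qed.
Section Hom.
Variables G H : grp.
Variable f : G -> H.
Hypothesis hf : hom f.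

Lemma hom1 : f gone = gone.
Proof. apply idem1. rewrite <- hf by exact I. rewrite gmul1. reflexivity. Qed.

Lemma homV x : f (ginv x) = ginv (f x).
Proof. apply inv_uniq_l. rewrite <- hf by exact I. rewrite gmulV. apply hom1. Qed.

Lemma hom_gpow x n : f (gpow x n) = gpow (f x) n.
Proof. induction n; simpl. apply hom1. rewrite hf by exact I. rewrite IHn. reflexivity. Qed.

Lemma hom_zpow x n : f (zpow x n) = zpow (f x) n.
Proof. unfold zpow. destruct (0 <=? n); rewrite hom_gpow; [|rewrite homV]; reflexivity. Qed.

Lemma hom_Theta u v p : f (Theta u v p) = Theta (f u) (f v) p.
Proof.
  unfold Theta. rewrite hf by exact I. rewrite hom_zpow, hf by exact I.
  destruct (snd p). reflexivity. rewrite hom1. reflexivity.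
Qed.
End Hom.

Lemma hom_on1 (G H : grp) (S : G -> Prop) (f : G -> H) :
  is_subgroup S -> hom_on S f -> f gone = gone.
Proof.
  intros [S1 _] hf. apply idem1. rewrite <- hf by exact S1. rewrite gmul1. reflexivity.
Qed.

Lemma hom_comp (G H K : grp) (f : G -> H) (g : H -> K) : hom f -> hom g -> hom (fun x => g (f x)).
Proof. intros hf hg x y _ _. rewrite hf, hg by exact I. reflexivity. Qed.

Lemma D_zpow (n : Z) : @zpow D_inf (1%Z, false) n = (n, false).
Proof.
  induction n using Z.peano_ind.
  - reflexivity.
  - rewrite <- Z.add_1_r, zpow_succ, IHn. reflexivity.
  - rewrite <- Z.sub_1_r, zpow_pred, IHn. unfold gmul; simpl; unfold dmul; simpl; f_equal; lia.
Qed.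

Definition ds : D_inf := (0%Z, true).
Definition dt : D_inf := (1%Z, true).

Lemma D_Theta (p : D_inf) : Theta ds dt p = p.
Proof.
  destruct p as [n b]. unfold Theta. simpl.
  change (dmul dt ds) with ((1%Z, false) : D_inf). rewrite D_zpow.
  destruct b; unfold gmul; simpl; unfold dmul; simpl; f_equal; lia.
Qed.

Lemma ds2 : @gmul D_inf ds ds = gone. Proof. reflexivity. Qed.
Lemma dt2 : @gmul D_inf dt dt = gone. Proof. reflexivity. Qed.

Lemma iso_free (G : grp) : isomorphic G D_inf ->
  exists A B : G -> Prop, free_product G A B /\
      (exists a, A a /\ a <> gone) /\ (exists b, B b /\ b <> gone).
Proof.
  intros [f [hf [finj fsurj]]].
  destruct (fsurj ds) as [xs Hxs]. destruct (fsurj dt) as [xt Hxt].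
  pose proof (hom1 _ _ f hf) as f1.
  pose proof (homV _ _ f hf) as fV.
  assert (Hs2 : xs ** xs = gone). { apply finj. rewrite hf, f1, Hxs by exact I. reflexivity. }
  assert (Ht2 : xt ** xt = gone). { apply finj. rewrite hf, f1, Hxt by exact I. reflexivity. }
  assert (Hrep : forall x, Theta xs xt (f x) = x).
  { intros x. apply finj. rewrite hom_Theta by exact hf. rewrite Hxs, Hxt. apply D_Theta. }
  exists (fun x => f x = gone \/ f x = ds), (fun x => f x = gone \/ f x = dt).
  split; [|split].
  - split; [|split].
    + split; [left; exact f1|split].
      * intros x y Hx Hy. rewrite hf by exact I.
        destruct Hx as [-> | ->]; destruct Hy as [-> | ->]; [left|right|right|left]; reflexivity.
      * intros x Hx. rewrite fV. destruct Hx as [-> | ->]; [left|right]; reflexivity.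
    + split; [left; exact f1|split].
      * intros x y Hx Hy. rewrite hf by exact I.
        destruct Hx as [-> | ->]; destruct Hy as [-> | ->]; [left|right|right|left]; reflexivity.
      * intros x Hx. rewrite fV. destruct Hx as [-> | ->]; [left|right]; reflexivity.
    + intros K fA fB hA hB.
      assert (SA : is_subgroup (fun x => f x = gone \/ f x = ds)).
      { split; [left; exact f1|split].
        * intros x y Hx Hy. rewrite hf by exact I.
          destruct Hx as [-> | ->]; destruct Hy as [-> | ->]; [left|right|right|left]; reflexivity.
        * intros x Hx. rewrite fV. destruct Hx as [-> | ->]; [left|right]; reflexivity. }
      assert (SB : is_subgroup (fun x => f x = gone \/ f x = dt)).
      { split; [left; exact f1|split].
        * intros x y Hx Hy. rewrite hf by exact I.
          destruct Hx as [-> | ->]; destruct Hy as [-> | ->]; [left|right|right|left]; reflexivity.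
        * intros x Hx. rewrite fV. destruct Hx as [-> | ->]; [left|right]; reflexivity. }
      pose proof (hom_on1 _ _ _ _ SA hA) as fA1.
      pose proof (hom_on1 _ _ _ _ SB hB) as fB1.
      assert (xsA : f xs = gone \/ f xs = ds) by (right; exact Hxs).
      assert (xtB : f xt = gone \/ f xt = dt) by (right; exact Hxt).
      assert (Hu : fA xs ** fA xs = gone).
      { rewrite <- hA by exact xsA. rewrite Hs2. exact fA1. }
      assert (Hv : fB xt ** fB xt = gone).
      { rewrite <- hB by exact xtB. rewrite Ht2. exact fB1. }
      split.
      * exists (fun x => Theta (fA xs) (fB xt) (f x)). split; [|split].
        -- apply hom_comp. exact hf. intros p q _ _. apply Theta_hom; assumption.
        -- intros a [Ha | Ha].
           ++ assert (a = gone) by (apply finj; rewrite Ha, f1; reflexivity). subst a.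
              rewrite Ha, fA1. unfold Theta. simpl. apply mulr1.
           ++ assert (a = xs) by (apply finj; rewrite Ha, Hxs; reflexivity). subst a.
              rewrite Ha. unfold Theta. simpl. apply gmul1.
        -- intros b [Hb | Hb].
           ++ assert (b = gone) by (apply finj; rewrite Hb, f1; reflexivity). subst b.
              rewrite Hb, fB1. unfold Theta. simpl. apply mulr1.
           ++ assert (b = xt) by (apply finj; rewrite Hb, Hxt; reflexivity). subst b.
              rewrite Hb. unfold Theta. simpl. rewrite zpow1, <- gmulA, Hu, mulr1. reflexivity.
      * intros phi psi hphi hpsi HA HB x.
        rewrite <- (Hrep x), !hom_Theta by assumption.
        rewrite (HA xs xsA), (HB xt xtB). reflexivity.
  - exists xs. split. right; exact Hxs. intros E. subst. rewrite f1 in Hxs. discriminate.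
  - exists xt. split. right; exact Hxt. intros E. subst. rewrite f1 in Hxt. discriminate.
Qed.
Section FP.
Variable G : grp.
Variables A B : G -> Prop.
Hypothesis SA : is_subgroup A.
Hypothesis SB : is_subgroup B.

Definition sd (e : bool) : G -> Prop := if e then A else B.

Lemma sd1 e : sd e gone.
Proof. destruct e; simpl; [apply SA|apply SB]. Qed.
Lemma sdM e x y : sd e x -> sd e y -> sd e (x ** y).
Proof. destruct e; simpl; [apply SA|apply SB]. Qed.
Lemma sdV e x : sd e x -> sd e (ginv x).
Proof. destruct e; simpl; [apply SA|apply SB]. Qed.

Definition emi := excluded_middle_informative.

Definition act (s : bool * G) (w : list (bool * G)) : list (bool * G) :=
  if emi (snd s = gone) then w else
  match w with
  | [] => [s]
  | t :: rest => if Bool.bool_dec (fst s) (fst t) then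
                   (if emi (snd s ** snd t = gone) then rest else (fst s, snd s ** snd t) :: rest)
                 else s :: w
  end.

Fixpoint red (l : list (bool * G)) : Prop :=
  match l with
  | [] => True
  | s :: l' => sd (fst s) (snd s) /\ snd s <> gone /\ red l' /\
               match l' with [] => True | t :: _ => fst t <> fst s end
  end.

Ltac dec := match goal with
  | |- context [emi ?P] => destruct (emi P)
  | |- context [Bool.bool_dec ?a ?b] => destruct (Bool.bool_dec a b)
  end.

Lemma act_red s w : red w -> sd (fst s) (snd s) -> red (act s w).
Proof.
  destruct s as [e x]. intros Hw Hs. unfold act; simpl in *.
  destruct w as [|[e' z] rest]; repeat dec; simpl in *; subst; try tauto;
  destruct Hw as (Hz & Hz1 & Hr & Hh); try tauto.
  all: repeat split; try tauto; try (apply sdM; tauto); try (destruct rest; simpl in *; tauto); try congruence.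
Qed.

Lemma act_1 e w : act (e, gone) w = w.
Proof. unfold act; simpl. dec; tauto. Qed.

Lemma act_nil e x : x <> gone -> act (e, x) [] = [(e, x)].
Proof. intros. unfold act; simpl. dec; tauto. Qed.

Lemma act_same e x z rest : x <> gone ->
  act (e, x) ((e, z) :: rest) = if emi (x ** z = gone) then rest else (e, x ** z) :: rest.
Proof. intros. unfold act; simpl. dec; [tauto|]. destruct (Bool.bool_dec e e); [reflexivity|tauto]. Qed.

Lemma act_diff e x e' z rest : x <> gone -> e <> e' ->
  act (e, x) ((e', z) :: rest) = (e, x) :: (e', z) :: rest.
Proof. intros. unfold act; simpl. dec; [tauto|]. destruct (Bool.bool_dec e e'); [tauto|reflexivity]. Qed.

Lemma act_hd e x rest : x <> gone ->
  match rest with [] => True | t :: _ => fst t <> e end -> act (e, x) rest = (e, x) :: rest.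
Proof.
  intros Hx Hh. destruct rest as [|[e' z] rest]. apply act_nil; auto.
  apply act_diff; simpl in *; congruence.
Qed.

Lemma L2 e x y w : red w -> sd e x -> sd e y ->
  act (e, x) (act (e, y) w) = act (e, x ** y) w.
Proof.
  intros Hw Hx Hy.
  destruct (emi (y = gone)) as [Hy1|Hy1].
  { subst y. rewrite mulr1, act_1. reflexivity. }
  destruct (emi (x = gone)) as [Hx1|Hx1].
  { subst x. rewrite gmul1, act_1. reflexivity. }
  destruct w as [|[e' z] rest].
  - rewrite act_nil by auto. rewrite act_same by auto.
    destruct (emi (x ** y = gone)) as [E|E].
    + rewrite E, act_1. reflexivity.
    + rewrite act_nil by auto. reflexivity.
  - simpl in Hw. destruct Hw as (Hz & Hz1 & Hr & Hh).
    destruct (Bool.bool_dec e e') as [<-|Hne].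
    + rewrite (act_same e y) by auto.
      destruct (emi (y ** z = gone)) as [Hyz|Hyz].
      * rewrite act_hd by auto.
        destruct (emi (x ** y = gone)) as [Hxy|Hxy].
        -- rewrite Hxy, act_1. f_equal. f_equal.
           rewrite (inv_uniq_l _ _ _ Hxy). rewrite (inv_uniq _ _ _ Hyz). reflexivity.
        -- rewrite act_same by auto. rewrite <- gmulA, Hyz, mulr1.
           dec; [tauto|reflexivity].
      * rewrite act_same by auto.
        destruct (emi (x ** y = gone)) as [Hxy|Hxy].
        -- rewrite Hxy, act_1. rewrite gmulA, Hxy, gmul1. dec; [tauto|reflexivity].
        -- rewrite act_same by auto. rewrite gmulA. reflexivity.
    + rewrite (act_diff e y) by auto. rewrite act_same by auto.
      destruct (emi (x ** y = gone)) as [Hxy|Hxy].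
      * rewrite Hxy, act_1. reflexivity.
      * rewrite act_diff by auto. reflexivity.
Qed.

Definition okL (l : list (bool * G)) := Forall (fun s => sd (fst s) (snd s)) l.

Lemma red_okL l : red l -> okL l.
Proof. induction l; simpl; intros; constructor; tauto. Qed.

Lemma act_okL s w : okL w -> sd (fst s) (snd s) -> okL (act s w).
Proof.
  destruct s as [e x]. intros Hw Hs. unfold act; simpl in *.
  destruct w as [|[e' z] rest]; repeat dec; simpl in *; subst; try (constructor; auto);
  inversion Hw; subst; try assumption; try constructor; auto.
  simpl in *. apply sdM; assumption.
Qed.

Definition mulw (u v : list (bool * G)) := fold_right act v u.

Lemma mulw_red u v : okL u -> red v -> red (mulw u v).
Proof. induction 1; simpl; intros; auto. apply act_red; auto. Qed.

Lemma mulw_okL u v : okL u -> okL v -> okL (mulw u v).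
Proof. induction 1; simpl; intros; auto. apply act_okL; auto. Qed.

Lemma act_red_cons s l : red (s :: l) -> act s l = s :: l.
Proof. destruct s as [e x]. simpl. intros (H1 & H2 & H3 & H4). apply act_hd; auto. Qed.

Lemma mulw_app_red u v : red (u ++ v) -> mulw u v = u ++ v.
Proof.
  induction u as [|s u IH]; simpl; intros H. reflexivity.
  assert (red (u ++ v)) by tauto. rewrite IH by assumption. apply act_red_cons. exact H.
Qed.

Lemma mulw_act s w v : okL w -> sd (fst s) (snd s) -> red v ->
  mulw (act s w) v = act s (mulw w v).
Proof.
  destruct s as [e x]. simpl. intros Hw Hx Hv.
  destruct (emi (x = gone)) as [Hx1|Hx1].
  { subst x. rewrite !act_1. reflexivity. }
  destruct w as [|[e' z] rest].
  - rewrite act_nil by auto. reflexivity.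
  - inversion Hw as [|? ? Hz Hrest]; subst. simpl in Hz.
    destruct (Bool.bool_dec e e') as [<-|Hne].
    + rewrite act_same by auto. simpl.
      rewrite L2 by (auto; apply mulw_red; auto).
      destruct (emi (x ** z = gone)) as [E|E].
      * rewrite E, act_1. reflexivity.
      * reflexivity.
    + rewrite act_diff by auto. reflexivity.
Qed.

Lemma mulw_assoc u v w : okL u -> okL v -> red w -> mulw (mulw u v) w = mulw u (mulw v w).
Proof.
  induction 1 as [|s u Hs Hu IH]; simpl; intros Hv Hw. reflexivity.
  rewrite mulw_act; auto. rewrite IH; auto. apply mulw_okL; auto.
Qed.

Definition sinv (s : bool * G) : bool * G := (fst s, ginv (snd s)).
Definition winv (u : list (bool * G)) := rev (map sinv u).

Lemma winv_okL u : okL u -> okL (winv u).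
Proof.
  intros H. unfold winv, okL in *. apply Forall_rev. apply Forall_map.
  eapply Forall_impl; [|exact H]. intros [e x]; simpl. apply sdV.
Qed.

Lemma mulw_app l1 l2 v : mulw (l1 ++ l2) v = mulw l1 (mulw l2 v).
Proof. unfold mulw. apply fold_right_app. Qed.

Lemma mulw_winv u : red u -> mulw (winv u) u = [].
Proof.
  induction u as [|[e x] u IH]; simpl; intros H. reflexivity.
  unfold winv in *. simpl. rewrite mulw_app. simpl.
  destruct H as (H1 & H2 & H3 & H4).
  assert (ginv x <> gone). { intros E. apply H2. rewrite <- (invK _ x), E. apply inv1. }
  unfold sinv; simpl. rewrite act_same by auto. dec. apply IH; auto. exfalso; apply n. apply gmulV.
Qed.

Definition FPc := { l : list (bool * G) | red l }.

Lemma FP_eq (a b : FPc) : proj1_sig a = proj1_sig b -> a = b.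
Proof. apply eq_sig_hprop. intros. apply proof_irrelevance. Qed.

Definition FPmul (a b : FPc) : FPc :=
  exist _ (mulw (proj1_sig a) (proj1_sig b)) (mulw_red _ _ (red_okL _ (proj2_sig a)) (proj2_sig b)).
Definition FPone : FPc := exist _ [] I.
Definition FPinv (a : FPc) : FPc :=
  exist _ (mulw (winv (proj1_sig a)) []) (mulw_red _ [] (winv_okL _ (red_okL _ (proj2_sig a))) I).

Lemma FPA x y z : FPmul x (FPmul y z) = FPmul (FPmul x y) z.
Proof.
  apply FP_eq. destruct x, y, z; simpl. symmetry. apply mulw_assoc; auto using red_okL.
Qed.
Lemma FP1 x : FPmul FPone x = x.
Proof. apply FP_eq. reflexivity. Qed.
Lemma FPV x : FPmul (FPinv x) x = FPone.
Proof.
  apply FP_eq. destruct x as [l Hl]; simpl.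
  rewrite mulw_assoc; auto using red_okL, winv_okL. apply mulw_winv; auto. constructor.
Qed.

Definition FP : grp := Grp FPc FPmul FPone FPinv FPA FP1 FPV.

Lemma decomp u v : red u -> red v -> exists u1 r v1, u = u1 ++ r /\ v = winv r ++ v1 /\
  (mulw u v = u1 ++ v1 \/ exists u1' e x y v1', u1 = u1' ++ [(e, x)] /\ v1 = (e, y) :: v1' /\
      mulw u v = u1' ++ (e, x ** y) :: v1').
Proof.
  intros Hu Hv. induction u as [|[e x] u0 IH].
  - exists [], [], v. simpl. auto.
  - simpl in Hu. destruct Hu as (Hx & Hx1 & Hu0 & Hh).
    destruct (IH Hu0) as (u1 & r & v1 & E1 & E2 & E3).
    change (mulw ((e, x) :: u0) v) with (act (e, x) (mulw u0 v)).
    destruct u1 as [|t u1t].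
    + simpl in E1. subst u0.
      destruct E3 as [E3 | (u1' & e0 & x0 & y0 & v1' & F1 & _)];
        [| destruct u1'; discriminate F1].
      simpl in E3. rewrite E3. destruct v1 as [|[e' y] v1t].
      * exists [(e, x)], r, []. split; [reflexivity|]. split; [exact E2|].
        left. apply act_nil; auto.
      * destruct (Bool.bool_dec e e') as [<-|Hne].
        -- rewrite act_same by auto. destruct (emi (x ** y = gone)) as [Hxy|Hxy].
           ++ exists [], ((e, x) :: r), v1t. split; [reflexivity|]. split.
              ** rewrite E2. unfold winv. simpl. rewrite <- app_assoc. simpl.
                 rewrite (inv_uniq _ _ _ Hxy). reflexivity.
              ** left. reflexivity.
           ++ exists [(e, x)], r, ((e, y) :: v1t). split; [reflexivity|]. split; [exact E2|].
              right. exists [], e, x, y, v1t. auto.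
        -- rewrite act_diff by auto. exists [(e, x)], r, ((e', y) :: v1t).
           split; [reflexivity|]. split; [exact E2|]. left. reflexivity.
    + simpl in E1. subst u0. simpl in Hh.
      exists ((e, x) :: t :: u1t), r, v1. split; [reflexivity|]. split; [exact E2|].
      destruct E3 as [E3 | (u1' & e0 & x0 & y0 & v1' & F1 & F2 & F3)].
      * left. rewrite E3. simpl. apply act_hd; auto.
      * right. exists ((e, x) :: u1'), e0, x0, y0, v1'. split; [rewrite F1; reflexivity|].
        split; [exact F2|]. rewrite F3.
        destruct u1' as [|t' u1''].
        -- simpl in F1. injection F1 as -> ->. simpl in *. apply act_hd; auto.
        -- simpl in F1. injection F1 as -> _. simpl. apply act_hd; auto.
Qed.

Definition cnt (p l : list (bool * G)) : Z := (occ p l - occ (winv p) l)%Z.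

Lemma sinvK s : sinv (sinv s) = s.
Proof. destruct s as [e x]. unfold sinv; simpl. rewrite invK. reflexivity. Qed.

Lemma map_sinvK l : map sinv (map sinv l) = l.
Proof. rewrite map_map. induction l; simpl; auto. rewrite sinvK, IHl. reflexivity. Qed.

Lemma winvK l : winv (winv l) = l.
Proof. unfold winv. rewrite map_rev, rev_involutive. apply map_sinvK. Qed.

Lemma winv_len l : length (winv l) = length l.
Proof. unfold winv. rewrite length_rev, length_map. reflexivity. Qed.

Lemma winv_ne l : l <> [] -> winv l <> [].
Proof. intros H E. apply H. apply length_zero_iff_nil. rewrite <- winv_len, E. reflexivity. Qed.

Lemma occ_winv q r : q <> [] -> occ q (winv r) = occ (winv q) r.
Proof.
  intros Hq. unfold winv. rewrite occ_rev by auto.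
  rewrite <- (map_sinvK (rev q)). rewrite occ_map.
  - rewrite map_rev. reflexivity.
  - intros x y E. rewrite <- (sinvK x), <- (sinvK y), E. reflexivity.
Qed.

Lemma cnt_winv p r : p <> [] -> cnt p (winv r) = (- cnt p r)%Z.
Proof.
  intros Hp. unfold cnt. rewrite occ_winv by auto. rewrite occ_winv by (apply winv_ne; auto).
  rewrite winvK. lia.
Qed.

Lemma cnt_app p l1 l2 :
  (Z.abs (cnt p (l1 ++ l2) - cnt p l1 - cnt p l2) <= Z.of_nat (length p))%Z.
Proof.
  unfold cnt. pose proof (occ_app_bound _ p l1 l2). pose proof (occ_app_bound _ (winv p) l1 l2).
  cbv zeta in *. rewrite winv_len in H0. lia.
Qed.

Lemma cnt_single p s : (Z.abs (cnt p [s]) <= 1)%Z.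
Proof.
  unfold cnt. simpl. pose proof (ind_bnd (prefix p [s])). pose proof (ind_bnd (prefix (winv p) [s])). lia.
Qed.

Lemma cnt_nil p : cnt p [] = 0%Z.
Proof. reflexivity. Qed.

Lemma cnt_qm p u v : p <> [] -> red u -> red v ->
  (Z.abs (cnt p (mulw u v) - cnt p u - cnt p v) <= 6 * Z.of_nat (length p) + 3)%Z.
Proof.
  intros Hp Hu Hv. destruct (decomp u v Hu Hv) as (u1 & r & v1 & E1 & E2 & E3).
  pose proof (cnt_app p u1 r). pose proof (cnt_app p (winv r) v1). pose proof (cnt_winv p r Hp).
  rewrite <- E1 in H. rewrite <- E2 in H0.
  destruct E3 as [E3 | (u1' & e & x & y & v1' & F1 & F2 & F3)].
  - rewrite E3. pose proof (cnt_app p u1 v1). lia.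
  - rewrite F3. subst u1 v1.
    pose proof (cnt_app p u1' ([(e, x ** y)] ++ v1')).
    pose proof (cnt_app p [(e, x ** y)] v1').
    pose proof (cnt_app p u1' [(e, x)]).
    pose proof (cnt_app p [(e, y)] v1').
    pose proof (cnt_single p (e, x ** y)). pose proof (cnt_single p (e, x)). pose proof (cnt_single p (e, y)).
    simpl app in *. lia.
Qed.

Definition mkFP (l : list (bool * G)) : FPc :=
  match emi (red l) with left H => exist _ l H | right _ => FPone end.

Lemma mkFP_val l : red l -> proj1_sig (mkFP l) = l.
Proof. intros H. unfold mkFP. destruct (emi (red l)); tauto. Qed.

Lemma mulw_act_nil s v : mulw (act s []) v = act s v.
Proof.
  destruct s as [e x]. destruct (emi (x = gone)) as [->|Hx].
  - rewrite !act_1. reflexivity.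
  - rewrite act_nil by auto. reflexivity.
Qed.

Lemma fX_hom e : hom_on (sd e) (fun x => (mkFP (act (e, x) [])) : FP).
Proof.
  intros x y Hx Hy. apply FP_eq. simpl.
  rewrite !mkFP_val by (apply act_red; simpl; auto using sdM).
  rewrite mulw_act_nil. symmetry. apply L2; simpl; auto.
Qed.

Lemma get_phi : free_product G A B -> exists phi : G -> FP, hom phi /\
  (forall a, A a -> proj1_sig (phi a) = act (true, a) []) /\
  (forall b, B b -> proj1_sig (phi b) = act (false, b) []).
Proof.
  intros (_ & _ & U).
  destruct (U FP _ _ (fX_hom true) (fX_hom false)) as [[phi (Hphi & HA & HB)] _].
  exists phi. split; [exact Hphi|]. split.
  - intros a Ha. rewrite HA by auto. apply mkFP_val. apply act_red; simpl; auto.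
  - intros b Hb. rewrite HB by auto. apply mkFP_val. apply act_red; simpl; auto.
Qed.

Lemma no_gt (Hall : forall g : G, g <> gone -> gen_torsion g) (p : list (bool * G)) (Hp : p <> [])
  (phi : G -> FP) (Hphi : hom phi) (h : G)
  (Hk : forall k, (Z.of_nat k <= cnt p (proj1_sig (phi (gpow h k))))%Z) : False.
Proof.
  set (D := (6 * Z.of_nat (length p) + 3)%Z).
  set (c := fun x => cnt p (proj1_sig (phi x))).
  assert (QM : forall x y, (Z.abs (c (x ** y) - c x - c y) <= D)%Z).
  { intros x y. unfold c. rewrite Hphi by exact I. simpl.
    apply cnt_qm; auto; apply proj2_sig. }
  assert (C1 : c gone = 0%Z).
  { unfold c. rewrite (hom1 _ _ _ Hphi). reflexivity. }
  set (g := gpow h (Z.to_nat (4 * D + 1))).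
  assert (Cg : (4 * D + 1 <= c g)%Z).
  { unfold c, g. specialize (Hk (Z.to_nat (4 * D + 1))). rewrite Z2Nat.id in Hk; [exact Hk|].
    unfold D. lia. }
  assert (Hg : g <> gone). { intros E. rewrite E, C1 in Cg. unfold D in Cg. lia. }
  destruct (Hall g Hg) as [_ [xs [Hne Hprod]]].
  assert (Cconj : forall x, (D + 1 <= c (conj g x))%Z).
  { intros x. unfold conj. pose proof (QM x (g ** ginv x)). pose proof (QM g (ginv x)).
    pose proof (QM x (ginv x)). rewrite mulVr, C1 in H1. lia. }
  assert (Hl : forall ys, (forall y, In y ys -> (D + 1 <= c y)%Z) ->
                 (Z.of_nat (length ys) <= c (lprod ys))%Z).
  { induction ys as [|y ys IH]; intros Hy; simpl. rewrite C1. lia.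
    pose proof (QM y (lprod ys)). pose proof (Hy y (or_introl eq_refl)).
    assert (Z.of_nat (length ys) <= c (lprod ys))%Z by (apply IH; intros; apply Hy; simpl; auto).
    lia. }
  specialize (Hl (map (conj g) xs)). rewrite Hprod, C1 in Hl.
  assert (Z.of_nat (length (map (conj g) xs)) <= 0)%Z.
  { apply Hl. intros y Hy. apply in_map_iff in Hy. destruct Hy as [x [<- _]]. apply Cconj. }
  rewrite length_map in H. destruct xs; [tauto|simpl in H; lia].
Qed.

Fixpoint rep (q : list (bool * G)) (k : nat) : list (bool * G) :=
  match k with O => [] | S k => q ++ rep q k end.

Lemma occ_skip (p : list (bool * G)) x l : ~ prefix p (x :: l) -> occ p (x :: l) = occ p l.
Proof. intros H. change (occ p (x :: l)) with (ind (prefix p (x :: l)) + occ p l)%Z. rewrite ind_false by auto. lia. Qed.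

Lemma occ_hit (p : list (bool * G)) x l : prefix p (x :: l) -> occ p (x :: l) = (1 + occ p l)%Z.
Proof. intros H. change (occ p (x :: l)) with (ind (prefix p (x :: l)) + occ p l)%Z. rewrite ind_true by auto. lia. Qed.

Lemma prefix_cons (y : bool * G) p x l : prefix (y :: p) (x :: l) -> x = y /\ prefix p l.
Proof. intros [z Hz]. injection Hz as -> ->. split; [reflexivity|]. exists z; reflexivity. Qed.

Lemma phi_rep (phi : G -> FP) (Hphi : hom phi) h q :
  proj1_sig (phi h) = q -> (forall k, red (rep q k)) ->
  forall k, proj1_sig (phi (gpow h k)) = rep q k.
Proof.
  intros Hq Hr k. induction k; simpl.
  - rewrite (hom1 _ _ _ Hphi). reflexivity.
  - rewrite Hphi by exact I. simpl. rewrite Hq, IHk. apply mulw_app_red. apply (Hr (S k)).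
Qed.

Lemma case1 (HFP : free_product G A B) (Hall : forall g : G, g <> gone -> gen_torsion g)
  a b : A a -> a <> gone -> B b -> b <> gone -> ginv a = a /\ ginv b = b.
Proof.
  intros Ha Ha1 Hb Hb1. apply NNPP. intros Hn.
  destruct (get_phi HFP) as (phi & Hphi & HA & HB).
  set (q := [(true, a); (false, b)]).
  assert (Hq : proj1_sig (phi (a ** b)) = q).
  { rewrite Hphi by exact I. simpl. rewrite HA, HB by auto.
    rewrite mulw_act_nil, act_nil by auto. apply act_diff; auto; discriminate. }
  assert (Hr : forall k, red (rep q k)).
  { induction k; simpl. exact I. repeat split; auto; try discriminate. destruct k; [exact I|unfold q; simpl; discriminate]. }
  apply (no_gt Hall q ltac:(discriminate) phi Hphi (a ** b)).
  intros k. rewrite (phi_rep phi Hphi _ q Hq Hr k).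
  assert (Wq : winv q = [(false, ginv b); (true, ginv a)]) by reflexivity.
  unfold cnt. rewrite Wq. induction k. simpl. lia.
  change (rep q (S k)) with ((true, a) :: (false, b) :: rep q k).
  rewrite (occ_hit q (true, a) ((false, b) :: rep q k)) by (exists (rep q k); reflexivity).
  rewrite occ_skip by (intros H; apply prefix_cons in H; destruct H as [H _]; discriminate).
  rewrite occ_skip by (intros H; apply prefix_cons in H; destruct H as [H _]; discriminate).
  rewrite occ_skip.
  - rewrite Nat2Z.inj_succ. lia.
  - intros H. apply prefix_cons in H. destruct H as [H1 H2]. injection H1 as H1.
    destruct k; simpl in H2; destruct H2 as [z Hz]; [discriminate|].
    injection Hz as H3 _. apply Hn. auto.
Qed.

Ltac skipP := let H := fresh in intros H; repeat (apply prefix_cons in H;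
  let E := fresh in destruct H as [E H]; try (injection E; intros; congruence)).

Lemma case3 (HFP : free_product G A B) (Hall : forall g : G, g <> gone -> gen_torsion g)
  a1 a2 b : A a1 -> a1 <> gone -> A a2 -> a2 <> gone -> a1 <> a2 ->
  ginv a1 = a1 -> ginv a2 = a2 -> B b -> b <> gone -> False.
Proof.
  intros H1 H11 H2 H21 Hne Hi1 Hi2 Hb Hb1.
  destruct (get_phi HFP) as (phi & Hphi & HA & HB).
  set (a3 := a1 ** a2).
  assert (H3 : A a3) by (apply SA; auto).
  assert (H31 : a3 <> gone).
  { intros E. apply Hne. unfold a3 in E. apply inv_uniq in E. rewrite E. auto. }
  assert (H13 : a3 <> a1).
  { intros E. apply H21. apply (mulKl _ a1). unfold a3 in E. rewrite E, mulr1. reflexivity. }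
  assert (H23 : a3 <> a2).
  { intros E. apply H11. apply (mulKr _ a2). unfold a3 in E. rewrite E, gmul1. reflexivity. }
  set (q := [(true, a1); (false, b); (true, a2); (false, b); (true, a3); (false, b)]).
  set (h := a1 ** (b ** (a2 ** (b ** (a3 ** b))))).
  assert (Hq : proj1_sig (phi h) = q).
  { unfold h. rewrite !Hphi by exact I. simpl.
    rewrite (HA a1), (HA a2), (HA a3), !(HB b) by auto.
    rewrite !mulw_act_nil. rewrite (act_nil false b) by auto.
    rewrite !act_diff by (auto; discriminate). reflexivity. }
  assert (Hr : forall k, red (rep q k)).
  { induction k; simpl. exact I. repeat split; auto; try discriminate. destruct k; [exact I|unfold q; simpl; discriminate]. }
  apply (no_gt Hall [(true, a1); (false, b); (true, a2)] ltac:(discriminate) phi Hphi h).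
  intros k. rewrite (phi_rep phi Hphi _ q Hq Hr k).
  assert (Wp : winv [(true, a1); (false, b); (true, a2)] = [(true, a2); (false, ginv b); (true, a1)]).
  { unfold winv, sinv. simpl. rewrite Hi1, Hi2. reflexivity. }
  unfold cnt. rewrite Wp.
  induction k. simpl. lia.
  change (rep q (S k)) with ((true, a1) :: (false, b) :: (true, a2) :: (false, b) :: (true, a3) :: (false, b) :: rep q k).
  rewrite occ_hit by (eexists; reflexivity).
  do 5 (rewrite occ_skip by skipP).
  do 6 (rewrite occ_skip by skipP).
  rewrite Nat2Z.inj_succ. lia.
Qed.
End FP.

Lemma fp_swap (G : grp) A B : free_product G A B -> free_product G B A.
Proof.
  intros (SA & SB & U). split; [exact SB|]. split; [exact SA|].
  intros H fB fA hB hA. destruct (U H fA fB hA hB) as [[phi (h1 & h2 & h3)] Uq].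
  split.
  - exists phi. auto.
  - intros phi0 psi0 hp hq E1 E2. apply Uq; auto.
Qed.

Lemma fp_dinf (G : grp) A B (HFP : free_product G A B) a b :
  A a -> a <> gone -> B b -> b <> gone -> a ** a = gone -> b ** b = gone ->
  (forall x, A x -> x = gone \/ x = a) -> (forall x, B x -> x = gone \/ x = b) ->
  isomorphic G D_inf.
Proof.
  intros Ha Ha1 Hb Hb1 Ha2 Hb2 HA HB.
  destruct HFP as (SA & SB & U).
  set (fA := fun x : G => if emi (x = gone) then (gone : D_inf) else ds).
  set (fB := fun x : G => if emi (x = gone) then (gone : D_inf) else dt).
  assert (hA : hom_on A fA).
  { intros x y Hx Hy. unfold fA.
    destruct (HA x Hx) as [->| ->]; destruct (HA y Hy) as [->| ->];
      rewrite ?gmul1, ?mulr1, ?Ha2; repeat (destruct (emi _)); try tauto; reflexivity. }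
  assert (hB : hom_on B fB).
  { intros x y Hx Hy. unfold fB.
    destruct (HB x Hx) as [->| ->]; destruct (HB y Hy) as [->| ->];
      rewrite ?gmul1, ?mulr1, ?Hb2; repeat (destruct (emi _)); try tauto; reflexivity. }
  destruct (U D_inf fA fB hA hB) as [[psi (hpsi & pA & pB)] _].
  assert (psia : psi a = ds). { rewrite pA by auto. unfold fA. destruct (emi _); tauto. }
  assert (psib : psi b = dt). { rewrite pB by auto. unfold fB. destruct (emi _); tauto. }
  set (th := fun p : D_inf => Theta a b p).
  assert (hth : hom th). { intros p q _ _. apply Theta_hom; auto. }
  assert (K1 : forall p, psi (th p) = p).
  { intros p. unfold th. rewrite hom_Theta by auto. rewrite psia, psib. apply D_Theta. }
  assert (hid : hom_on A (fun x : G => x)) by (intros x y _ _; reflexivity).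
  assert (hid' : hom_on B (fun x : G => x)) by (intros x y _ _; reflexivity).
  destruct (U G _ _ hid hid') as [_ Uq].
  assert (K2 : forall x, th (psi x) = x).
  { apply (Uq (fun x => th (psi x)) (fun x => x)).
    - apply hom_comp; auto.
    - intros x y _ _. reflexivity.
    - intros x Hx. destruct (HA x Hx) as [->| ->].
      + apply (hom1 _ _ _ (hom_comp _ _ _ _ _ hpsi hth)).
      + rewrite psia. unfold th, Theta. simpl. apply gmul1.
    - intros x Hx. destruct (HB x Hx) as [->| ->].
      + apply (hom1 _ _ _ (hom_comp _ _ _ _ _ hpsi hth)).
      + rewrite psib. unfold th, Theta. simpl. rewrite zpow1, <- gmulA, Ha2, mulr1. reflexivity. }
  exists psi. split; [exact hpsi|]. split.
  - intros x y E. rewrite <- (K2 x), <- (K2 y), E. reflexivity.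
  - intros y. exists (th y). apply K1.
Qed.

Theorem theorem1p6 (G : grp) :
  fin_gen G ->
  (forall g : G, g <> gone -> gen_torsion g) ->
  ((exists A B : G -> Prop, free_product G A B /\
      (exists a, A a /\ a <> gone) /\ (exists b, B b /\ b <> gone))
   <-> isomorphic G D_inf).
Proof.
  intros _ Hall. split.
  - intros (A & B & HFP & (a & Ha & Ha1) & (b & Hb & Hb1)).
    pose proof HFP as (SA & SB & _).
    pose proof (fp_swap _ _ _ HFP) as HFP'.
    destruct (case1 G A B SA SB HFP Hall a b Ha Ha1 Hb Hb1) as [Hia Hib].
    assert (HA : forall x, A x -> x = gone \/ x = a).
    { intros x Hx. destruct (emi (x = gone)) as [E|E]; [left; exact E|right].
      apply NNPP. intros Hne.
      destruct (case1 G A B SA SB HFP Hall x b Hx E Hb Hb1) as [Hix _].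
      apply (case3 G A B SA SB HFP Hall a x b Ha Ha1 Hx E (fun e => Hne (eq_sym e)) Hia Hix Hb Hb1). }
    assert (HB : forall x, B x -> x = gone \/ x = b).
    { intros x Hx. destruct (emi (x = gone)) as [E|E]; [left; exact E|right].
      apply NNPP. intros Hne.
      destruct (case1 G A B SA SB HFP Hall a x Ha Ha1 Hx E) as [_ Hix].
      apply (case3 G B A SB SA HFP' Hall b x a Hb Hb1 Hx E (fun e => Hne (eq_sym e)) Hib Hix Ha Ha1). }
    apply (fp_dinf G A B HFP a b Ha Ha1 Hb Hb1).
    + rewrite <- Hia at 2. apply mulVr.
    + rewrite <- Hib at 2. apply mulVr.
    + exact HA.
    + exact HB.
  - apply iso_free.
Qed.
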